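(* Let $\psi(\theta;y,x)$ be an $\mathbb R^q$-valued function on $\Theta\times\mathcal Y\times\mathcal X$, $\Theta\subseteq\mathbb R^q$, and let $\theta(\cdot)$ be the estimating-equation (EE) functional defined by: $\theta(P)$ is the unique solution $\theta\in\Theta$ of $E_P[\psi(\theta;Y,X)]=0$ (assumed to exist uniquely for all joint distributions on which it is evaluated). Fix a Markov kernel $P_{Y|X}$. Then $\theta(\cdot)$ is well-specified for $P_{Y|X}$ if and only if there exists $\theta_0\in\Theta$ such that $E[\psi(\theta_0;Y,X)\mid X=x]=\int\psi(\theta_0;y,x)P_{Y|X=x}(dy)=0$ for all $x\in\mathcal X$.
   Context: A joint distribution $P$ of $(Y,X)$ on $\mathcal Y\times\mathcal X$ is written $P=P_{Y|X}\otimes P_X$, meaning $P(dy,dx)=P_{Y|X=x}(dy)P_X(dx)$, with $P_X$ the marginal of $X$ and $P_{Y|X}$ a Markov kernel defined for every $x$. There is a designated set of ''acceptable'' regressor distributions; $P_{Y|X}\otimes P_X$ is in the domain of $\theta$ for every acceptable $P_X$, and the set is closed under mixing: if $P_X$ is acceptable and $P_X'$ is any distribution (e.g. a point mass $\delta_x$), then $(1-t)P_X+tP_X'$ is acceptable for $0\le t<1$. The functional is well-specified for $P_{Y|X}$ if $\theta(P_{Y|X}\otimes P_X)=\theta(P_{Y|X}\otimes P_X')$ for all acceptable $P_X,P_X'$. All expectations are assumed to exist. *)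

(* Defs.v *)
From HB Require Import structures.
From mathcomp Require Import all_boot all_order all_algebra.
From mathcomp Require Import all_classical all_reals all_analysis.
Set Implicit Arguments. Unset Strict Implicit. Unset Printing Implicit Defensive.
Import Order.TTheory GRing.Theory Num.Theory.
Local Open Scope classical_set_scope.
Local Open Scope ring_scope.
Local Open Scope ereal_scope.

(* Expectation of a real function f(y,x) under the joint law
   P = P_{Y|X} (x) P_X, i.e. P(dy,dx) = P_{Y|X=x}(dy) P_X(dx). *)
Definition joint_expect {R : realType} {dX dY : measure_display}
  {X : measurableType dX} {Y : measurableType dY}
  (k : R.-pker X ~> Y) (PX : probability X R) (f : Y -> X -> R) : \bar R :=
  \int[PX]_x \int[k x]_y (f y x)%:E.

Definition cond_expect {R : realType} {dX dY : measure_display}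
  {X : measurableType dX} {Y : measurableType dY}
  (k : R.-pker X ~> Y) (f : Y -> X -> R) (x : X) : \bar R :=
  \int[k x]_y (f y x)%:E.

Definition EE_solution {R : realType} {dX dY : measure_display}
  {X : measurableType dX} {Y : measurableType dY} {q : nat}
  (Theta : set 'rV[R]_q) (psi : 'rV[R]_q -> Y -> X -> 'rV[R]_q)
  (k : R.-pker X ~> Y) (PX : probability X R) (th : 'rV[R]_q) : Prop :=
  Theta th /\
  forall i : 'I_q, joint_expect k PX (fun y x => psi th y x ord0 i) = 0.

Definition is_mixture {R : realType} {dX : measure_display}
  {X : measurableType dX} (t : R) (P P' Q : probability X R) : Prop :=
  forall A, measurable A -> Q A = ((1 - t)%:E * P A + t%:E * P' A).

Definition mixing_closed {R : realType} {dX : measure_display}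
  {X : measurableType dX} (acc : probability X R -> Prop) : Prop :=
  forall (P P' Q : probability X R) (t : R),
    acc P -> (0 <= t < 1)%R -> is_mixture t P P' Q -> acc Q.

(* Well-specification of the EE functional for P_{Y|X}:
   theta(P_{Y|X} (x) P_X) = theta(P_{Y|X} (x) P_X') for all acceptable
   P_X, P_X'; since theta(P) is the unique EE solution, this says any
   two solutions for acceptable marginals coincide. *)
Definition well_specified {R : realType} {dX dY : measure_display}
  {X : measurableType dX} {Y : measurableType dY} {q : nat}
  (Theta : set 'rV[R]_q) (psi : 'rV[R]_q -> Y -> X -> 'rV[R]_q)
  (acc : probability X R -> Prop) (k : R.-pker X ~> Y) : Prop :=
  forall (PX PX' : probability X R) (th th' : 'rV[R]_q),
    acc PX -> acc PX' ->
    EE_solution Theta psi k PX th -> EE_solution Theta psi k PX' th' ->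
    th = th'.

(* Main.v *)
Require Import Defs.
From HB Require Import structures.
From mathcomp Require Import all_boot all_order all_algebra.
From mathcomp Require Import all_classical all_reals all_analysis.
From mathcomp Require Import measurable_realfun.
From mathcomp Require Import ring lra.
Import Order.TTheory GRing.Theory Num.Theory.
Local Open Scope classical_set_scope.
Local Open Scope ring_scope.
Local Open Scope ereal_scope.

Lemma maxr_sub (R : realFieldType) (r : R) : (Num.max r 0 - Num.max (- r) 0 = r)%R.
Proof.
rewrite /Num.max.
case: ifPn => h1; case: ifPn => h2; rewrite ?ltNge in h1 h2 *; try lra.
Qed.

Section mix.
Context {R : realType} {dX : measure_display} {X : measurableType dX}.

Definition mixQ (PX : probability X R) (x : X) : probability X R :=
  mnormalize (measure_add PX (\d_x)) PX.

Lemma mixQ_setT (PX : probability X R) x :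
  measure_add PX (\d_x) [set: X] = 2%:E.
Proof. rewrite measure_addE. have -> : (2%:E : \bar R) = 1 + 1 by rewrite -EFinD. congr (_ + _); [exact: probability_setT | exact: diracT]. Qed.

Lemma mnorm2 (mu : {measure set X -> \bar R}) (P : probability X R) A :
  mu [set: X] = 2%:E -> mnormalize mu P A = (2^-1)%:E * mu A.
Proof.
move=> h; rewrite /mnormalize h /=.
have -> : (2%:E == 0 :> \bar R) = false by rewrite eqe pnatr_eq0.
by rewrite /= muleC.
Qed.

Lemma mixQE (PX : probability X R) x A :
  mixQ PX x A = (2^-1)%:E * (PX A + \d_x A).
Proof.
rewrite /mixQ /= mnorm2; last exact: mixQ_setT.
congr (_ * _); exact: measure_addE.
Qed.

Lemma mixQ_ge0_integral (PX : probability X R) (x : X) (f : X -> \bar R) :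
  measurable_fun setT f -> (forall z, 0 <= f z) ->
  \int[mixQ PX x]_z f z = (2^-1)%:E * (\int[PX]_z f z + f x).
Proof.
move=> mf f0.
have h2 : (0 <= (2:R)^-1)%R by rewrite invr_ge0. pose h : {nonneg R} := NngNum h2.
rewrite (eq_measure_integral (mscale h (measure_add PX \d_x))); last first.
  move=> A mA _; etransitivity; first exact: mixQE.
  rewrite /mscale /=; congr (_ * _).
  by apply/esym; exact: measure_addE.
have f0' : forall z, [set: X] z -> 0 <= f z by move=> z _; exact: f0.
rewrite (ge0_integral_mscale _ _ _ mf f0') //; congr (_ * _).
etransitivity; first exact: (ge0_integral_measure_add _ _ _ f0' mf).
congr (_ + _).
by rewrite integral_dirac // diracT mul1e.
Qed.

Lemma mixQ_integral (PX : probability X R) (x : X) (g : X -> \bar R) :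
  PX.-integrable setT g -> g x \is a fin_num ->
  \int[mixQ PX x]_z g z = (2^-1)%:E * (\int[PX]_z g z + g x).
Proof.
move=> ig gx.
have mg := measurable_int _ ig.
rewrite integralE.
rewrite (mixQ_ge0_integral _ _ _ (measurable_funepos mg) (funepos_ge0 g)).
rewrite (mixQ_ge0_integral _ _ _ (measurable_funeneg mg) (funeneg_ge0 g)).
rewrite [\int[PX]_z g z]integralE.
have [a ea] : exists a, \int[PX]_z g^\+ z = a%:E.
  exists (fine (\int[PX]_z g^\+ z)); rewrite fineK //.
  exact/integrable_fin_num/integrable_funepos.
have [b eb] : exists b, \int[PX]_z g^\- z = b%:E.
  exists (fine (\int[PX]_z g^\- z)); rewrite fineK //.
  exact/integrable_fin_num/integrable_funeneg.
case E : (g x) gx => [r| |] // _.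
rewrite ea eb funeposE funenegE E -EFinN -!EFin_max -!EFinD -!EFinM.
congr EFin.
have hr : (Num.max r 0 - Num.max (- r) 0 = r)%R.
  exact: maxr_sub.
rewrite -{3}hr; ring.
Qed.

End mix.

Theorem lemma3p3p3 (R : realType) (dX dY : measure_display)
  (X : measurableType dX) (Y : measurableType dY) (q : nat)
  (Theta : set 'rV[R]_q) (psi : 'rV[R]_q -> Y -> X -> 'rV[R]_q)
  (acc : probability X R -> Prop) (k : R.-pker X ~> Y)
  (acc_ne : exists PX, acc PX)
  (acc_mix : mixing_closed acc)
  (int_cond : forall (th : 'rV[R]_q) (x : X) (i : 'I_q),
      (k x).-integrable setT (fun y => (psi th y x ord0 i)%:E))
  (int_joint : forall (th : 'rV[R]_q) (PX : probability X R) (i : 'I_q),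
      acc PX -> PX.-integrable setT (cond_expect k (fun y x => psi th y x ord0 i)))
  (EE_unique : forall PX : probability X R, acc PX ->
      exists th, EE_solution Theta psi k PX th /\
        forall th', EE_solution Theta psi k PX th' -> th' = th) :
  well_specified Theta psi acc k <->
  exists2 th0, Theta th0 &
    forall (x : X) (i : 'I_q), cond_expect k (fun y x => psi th0 y x ord0 i) x = 0.
Proof.
split.
- move=> ws.
  have [PX accPX] := acc_ne.
  have [th [[Tth sol] _]] := EE_unique PX accPX.
  exists th => // x i.
  set g := cond_expect k (fun y x => psi th y x ord0 i).
  have accQ : acc (mixQ PX x).
    apply: (acc_mix PX (\d_x) (mixQ PX x) (2^-1)%R accPX).
      by apply/andP; split; [rewrite invr_ge0 | rewrite invf_lt1 // ltr1n].
    move=> A mA; etransitivity; first exact: mixQE.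
    have -> : (1 - 2^-1 = 2^-1 :> R)%R by field.
    by rewrite ge0_muleDr.
  have [thQ [sQ _]] := EE_unique _ accQ.
  have eq1 : th = thQ.
    by apply: (ws PX (mixQ PX x) th thQ accPX accQ).
  subst thQ.
  have gx : g x \is a fin_num by exact: integrable_fin_num (int_cond th x i).
  have : (2^-1)%:E * (\int[PX]_z g z + g x) = 0.
    rewrite -(mixQ_integral _ _ _ (int_joint th PX i accPX) gx).
    exact: (sQ.2 i).
  have -> : \int[PX]_z g z = 0 by exact: (sol i).
  rewrite add0e => /eqP; rewrite mule_eq0 eqe invr_eq0 pnatr_eq0 /=.
  by move/eqP.
- move=> [th0 Tth0 h0] PX PX' th th' accPX accPX' s s'.
  have sol0 : forall P : probability X R, EE_solution Theta psi k P th0.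
    move=> P; split => // i; rewrite /joint_expect.
    by apply: integral0_eq => z _; exact: h0.
  have [u [_ hu]] := EE_unique PX accPX.
  have [u' [_ hu']] := EE_unique PX' accPX'.
  by rewrite (hu _ s) (hu' _ s') -(hu _ (sol0 PX)) -(hu' _ (sol0 PX')).
Qed.
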